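(* In the setting below, for any integer $k$ with $-g(K)\le k\le g(K)$ and any nonzero $a\in B'_k$, there is no element $b\in\widehat{CFD}(X_K^{[n]})$ with $D_1\circ D_2(b)=D_{123}(a)$ or with $D_1\circ D_{12}(b)=D_{123}(a)$.
   Context: Over $\mathbb F=\mathbb Z/2$. Let $K$ be a nontrivial knot of genus $g(K)$ in an $L$-space integral homology sphere, $C^-=CFK^-(K)$, a free $\mathbb F[U]$-complex with Alexander filtration $\cdots\subset\mathcal F_i\subset\mathcal F_{i+1}\subset\cdots$, $A(x)=\min\{i: x\in\mathcal F_i\}$, $U$ lowering $A$ by one, assumed reduced. A filtered basis is an $\mathbb F[U]$-basis whose images in the associated graded module form a basis. A vertically simplified basis is a filtered basis $\{\tilde\xi_0,\dots,\tilde\xi_{2m}\}$ with $A(\tilde\xi_{2j-1})-A(\tilde\xi_{2j})=h_j>0$, $\partial\tilde\xi_{2j-1}\equiv\tilde\xi_{2j}\pmod{UC^-}$ ($1\le j\le m$) and $\partial\tilde\xi_{2i}\equiv0\pmod{UC^-}$. A horizontally simplified basis is a filtered basis $\{\tilde\eta_0,\dots,\tilde\eta_{2m}\}$ with $A(\tilde\eta_{2j})-A(\tilde\eta_{2j-1})=\ell_j>0$, $\partial\tilde\eta_{2j-1}\equiv U^{\ell_j}\tilde\eta_{2j}\pmod{\mathcal F_{A(\tilde\eta_{2j-1})-1}}$, and $A(\partial\tilde\eta_{2i})<A(\tilde\eta_{2i})$. Fix such bases with the property that each $\tilde\xi_p$ is an $\mathbb F[U]$-combination of those $\tilde\eta_q$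 with $A(a_{p,q}\tilde\eta_q)=A(\tilde\xi_p)$, and vice versa. Let $N=\widehat{CFD}(X_K^{[n]})$ (any integer framing $n$), given by the following model: $\iota_0N$ has bases $\{\xi_p\}$ and $\{\eta_p\}$ related by the change-of-basis coefficients of $\{\tilde\xi_p\},\{\tilde\eta_p\}$ evaluated at $U=0$; each element of $\iota_0N$ inherits the Alexander grading of the corresponding element of $C^-$; $\iota_1N$ has basis $\{\kappa^j_1,\dots,\kappa^j_{h_j}\}_j\cup\{\lambda^j_1,\dots,\lambda^j_{\ell_j}\}_j$ together with generators of an ''unstable chain''. Coefficient maps: vertical chains $\xi_{2j-1}\xrightarrow{D_1}\kappa^j_1\xleftarrow{D_{23}}\kappa^j_2\xleftarrow{D_{23}}\cdots\xleftarrow{D_{23}}\kappa^j_{h_j}\xleftarrow{D_{123}}\xi_{2j}$; horizontal chains $\eta_{2j-1}\xrightarrow{D_3}\lambda^j_1\xrightarrow{D_{23}}\cdots\xrightarrow{D_{23}}\lambda^j_{\ell_j}\xrightarrow{D_2}\eta_{2j}$; and an unstable chain connecting $\xi_0$ to $\eta_0$ depending on $t=n-2\tau(K)$ (where $\tau(K)=A(\tilde\xi_0)$): for $t>0$, $\xi_0\xrightarrow{D_1}\mu_1\xleftarrow{D_{23}}\cdots\xleftarrow{D_{23}}\mu_t\xleftarrow{D_3}\eta_0$; for $t=0$, $\xi_0\xrightarrow{D_1}\nu_1\xleftarrow{D_\emptyset}\nu_2\xrightarrow{D_2}\eta_0$ (for an $L$-space knot, instead $\xi_0\xrightarrow{D_{12}}\eta_0$);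 for $t<0$, $\xi_0\xrightarrow{D_{12}}\nu_1\xleftarrow{D_\emptyset}\nu_2\xrightarrow{D_3}\mu_1\xrightarrow{D_{23}}\cdots\xrightarrow{D_{23}}\mu_{|t|}\xrightarrow{D_2}\eta_0$ (for an $L$-space knot, instead $\xi_0\xrightarrow{D_{123}}\mu_1\xrightarrow{D_{23}}\cdots\xrightarrow{D_{23}}\mu_{|t|}\xrightarrow{D_2}\eta_0$). Here an arrow $x\xrightarrow{D_I}y$ means $y$ appears in $D_I(x)$, the $D_I$ being extended linearly. $B_k\subset\iota_0N$ is the span of elements of Alexander grading $k$, and $B'_k=B_k\cap\operatorname{span}\{\xi_2,\xi_4,\dots,\xi_{2m}\}\cap\operatorname{span}\{\eta_1,\eta_3,\dots,\eta_{2m-1}\}$. *)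

(* Defs.v *)
From HB Require Import structures.
From mathcomp Require Import all_boot all_order all_algebra.
Import Order.TTheory GRing.Theory Num.Theory.
Local Open Scope ring_scope.

(* The knot Floer complex C^- = CFK^-(K).                               *)
(* C^- is a free F[U]-module (F = Z/2) of rank r.  We use coordinates   *)
(* with respect to the vertically simplified filtered basis ~xi_p, so   *)
(* an element of C^- is a row vector over {poly 'F_2} (U = 'X), ~xi_p   *)
(* is [delta_mx 0 p], and the differential is x |-> x *m Dm.  Since     *)
(* ~xi is a filtered basis with gradings Axi, the Alexander filtration  *)
(* is F_k = span{ U^s ~xi_p : Axi p - s <= k }.                          *)

Definition inF r (Axi : 'I_r -> int) (k : int) (x : 'rV[{poly 'F_2}]_r) : Prop :=
  forall (p : 'I_r) (s : nat), (x 0 p)`_s != 0 -> Axi p - s%:Z <= k.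

Definition hasA r (Axi : 'I_r -> int) (x : 'rV[{poly 'F_2}]_r) (a : int) : Prop :=
  inF r Axi a x /\ ~ inF r Axi (a - 1) x.

(* x \in U C^- *)
Definition inUC r (x : 'rV[{poly 'F_2}]_r) : Prop :=
  forall p : 'I_r, (x 0 p)`_0 = 0.

Definition filtered_basis r (Axi : 'I_r -> int) (B : 'M[{poly 'F_2}]_r)
    (Ab : 'I_r -> int) : Prop :=
  B \in unitmx /\
  forall (c : 'rV[{poly 'F_2}]_r) (k : int),
    inF r Axi k (c *m B) <->
    (forall (q : 'I_r) (s : nat), (c 0 q)`_s != 0 -> Ab q - s%:Z <= k).

(* Standing algebraic properties of CFK^- of a knot in an L-space      *)
(* integral homology sphere: F[U]-linear differential squaring to 0,   *)
(* preserving the filtration, reduced, with homology F[U].             *)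
Definition knot_complex r (Axi : 'I_r -> int) (Dm : 'M[{poly 'F_2}]_r) : Prop :=
  [/\ Dm *m Dm = 0,
      (forall x k, inF r Axi k x -> inF r Axi k (x *m Dm)),
      (forall x k, inF r Axi k x ->
         exists y z, x *m Dm = y + 'X *: z /\ inF r Axi (k - 1) y) &
      (exists z : 'rV[{poly 'F_2}]_r,
         z *m Dm = 0 /\
         (forall c, c *m Dm = 0 -> exists f w, c = f *: z + w *m Dm) /\
         (forall f w, f *: z = w *m Dm -> f = 0))].

(* genus via genus detection: g = max Alexander grading of HFK-hat,    *)
(* which for a reduced complex is the max grading of a filtered basis. *)
Definition genus_of r (Axi : 'I_r -> int) (g : nat) : Prop :=
  (forall p, Axi p <= g%:Z) /\ (exists p, Axi p = g%:Z).

(* indices: evI m i = 2i, oddI m j = 2j+1 (so xi_{2j-1}, j=1..m, is     *)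
(* oddI m (j-1) and xi_{2j} is evI m j) *)
Definition evI m (i : nat) : 'I_(m.*2.+1) := inord (i.*2).
Definition oddI m (j : nat) : 'I_(m.*2.+1) := inord (j.*2.+1).

Definition vert_simpl m (Dm : 'M[{poly 'F_2}]_(m.*2.+1)) (Axi : 'I_(m.*2.+1) -> int)
    (h : 'I_m -> nat) : Prop :=
  (forall j : 'I_m,
     [/\ (0 < h j)%N,
         Axi (oddI m j) - Axi (evI m j.+1) = (h j)%:Z &
         inUC _ (delta_mx 0 (oddI m j) *m Dm - delta_mx 0 (evI m j.+1))]) /\
  (forall i : 'I_m.+1, inUC _ (delta_mx 0 (evI m i) *m Dm)).

(* rows of Q are the horizontally simplified basis ~eta_q *)
Definition horiz_simpl m (Dm : 'M[{poly 'F_2}]_(m.*2.+1)) (Axi : 'I_(m.*2.+1) -> int)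
    (Q : 'M[{poly 'F_2}]_(m.*2.+1)) (Aeta : 'I_(m.*2.+1) -> int)
    (l : 'I_m -> nat) : Prop :=
  [/\ filtered_basis _ Axi Q Aeta,
      (forall j : 'I_m,
         [/\ (0 < l j)%N,
             Aeta (evI m j.+1) - Aeta (oddI m j) = (l j)%:Z &
             inF _ Axi (Aeta (oddI m j) - 1)
               (row (oddI m j) Q *m Dm - 'X^(l j) *: row (evI m j.+1) Q)]) &
      (forall i : 'I_m.+1,
         inF _ Axi (Aeta (evI m i) - 1) (row (evI m i) Q *m Dm))].

(* ~xi_p = sum_q P p q ~eta_q  and  ~eta_q = sum_p Q q p ~xi_p, with the *)
Definition compat r (Axi Aeta : 'I_r -> int) (P Q : 'M[{poly 'F_2}]_r) : Prop :=
  [/\ P *m Q = 1,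
      (forall p q, P p q != 0 -> hasA r Axi (P p q *: row q Q) (Axi p)) &
      (forall q p, Q q p != 0 -> hasA r Axi (Q q p *: delta_mx 0 p) (Aeta q))].

Definition eval0 r (M : 'M[{poly 'F_2}]_r) : 'M['F_2]_r :=
  map_mx (fun c : {poly 'F_2} => c.[0]) M.

(* The type D structure N = CFD-hat(X_K^[n]).                           *)

Definition nnu (t : int) (lsp : bool) : nat := if lsp || (0 < t) then 0%N else 2%N.

(* generators: xi_p (basis of iota_0 N), kappa^j_i, lambda^j_i, mu_i, nu_i *)
Definition Gen m (h l : 'I_m -> nat) (t : int) (lsp : bool) : finType :=
  ('I_(m.*2.+1) + {j : 'I_m & 'I_(h j)} + {j : 'I_m & 'I_(l j)}
     + 'I_(`|t|%N) + 'I_(nnu t lsp))%type.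

Inductive GenView m :=
  | GX of 'I_(m.*2.+1)
  | GK of 'I_m & nat     (* kappa^{j+1}_{i+1} *)
  | GL of 'I_m & nat     (* lambda^{j+1}_{i+1} *)
  | GM of nat            (* mu_{i+1} *)
  | GN of nat.           (* nu_{i+1} *)

Definition view (m : nat) (h l : 'I_m -> nat) (t : int) (lsp : bool)
    (x : Gen m h l t lsp) : GenView m :=
  match x with
  | inl (inl (inl (inl p))) => GX m p
  | inl (inl (inl (inr (existT j i)))) => GK m j i
  | inl (inl (inr (existT j i))) => GL m j i
  | inl (inr i) => GM m i
  | inr i => GN m i
  end.

Inductive Dlabel := D1 | D2 | D3 | D12 | D23 | D123 | Dnil.

(* coefficient of y in D_I(x); P0, Q0 : change of basis at U = 0,      *)
(* xi_p = sum_q P0 p q eta_q,  eta_q = sum_p Q0 q p xi_p.               *)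
Definition arrow m (h l : 'I_m -> nat) (P0 Q0 : 'M['F_2]_(m.*2.+1)) (t : int)
    (lsp : bool) (I : Dlabel) (x y : Gen m h l t lsp) : 'F_2 :=
  let b2 (c : bool) : 'F_2 := (c : nat)%:R in
  match I, view m h l t lsp x, view m h l t lsp y with
  | D1, GX p, GK j i => b2 ((p == j.*2.+1 :> nat) && (i == 0)%N)
  | D1, GX p, GM i => b2 [&& 0 < t, p == 0%N :> nat & i == 0%N]
  | D1, GX p, GN i => b2 [&& t == 0, ~~ lsp, p == 0%N :> nat & i == 0%N]
  | D2, GL j i, GX p => b2 (i == (l j).-1) * Q0 (evI m j.+1) p
  | D2, GN i, GX p => b2 [&& t == 0, ~~ lsp & i == 1%N] * Q0 (evI m 0) p
  | D2, GM i, GX p => b2 ((t < 0) && (i == `|t|.-1)) * Q0 (evI m 0) p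
  | D3, GX p, GL j i => P0 p (oddI m j) * b2 (i == 0)%N
  | D3, GX p, GM i => b2 ((0 < t) && (i == `|t|.-1)) * P0 p (evI m 0)
  | D3, GN i, GM i' => b2 [&& t < 0, ~~ lsp, i == 1%N & i' == 0%N]
  | D12, GX p, GX p' => b2 [&& t == 0, lsp & p == 0%N :> nat] * Q0 (evI m 0) p'
  | D12, GX p, GN i => b2 [&& t < 0, ~~ lsp, p == 0%N :> nat & i == 0%N]
  | D23, GK j i, GK j' i' => b2 ((j == j') && (i == i'.+1))
  | D23, GL j i, GL j' i' => b2 ((j == j') && (i' == i.+1))
  | D23, GM i, GM i' => b2 (((0 < t) && (i == i'.+1)) || ((t < 0) && (i' == i.+1)))
  | D123, GX p, GK j i => b2 ((p == j.*2.+2 :> nat) && (i == (h j).-1))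
  | D123, GX p, GM i => b2 [&& t < 0, lsp, p == 0%N :> nat & i == 0%N]
  | Dnil, GN i, GN i' => b2 ((i == 1%N) && (i' == 0%N))
  | _, _, _ => 0
  end.

Definition DI m h l P0 Q0 t lsp (I : Dlabel)
    (v : {ffun Gen m h l t lsp -> 'F_2}) : {ffun Gen m h l t lsp -> 'F_2} :=
  [ffun y => \sum_x v x * arrow m h l P0 Q0 t lsp I x y].

(* an element of iota_0 N given by its xi-coordinates *)
Definition inj0 m h l t lsp (a : 'rV['F_2]_(m.*2.+1)) : {ffun Gen m h l t lsp -> 'F_2} :=
  [ffun y => match view m h l t lsp y with GX p => a 0 p | _ => 0 end].

(* a \in B'_k: homogeneous of grading k, in span{xi_2,...,xi_2m} and   *)
(* in span{eta_1,eta_3,...,eta_{2m-1}}. *)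
Definition inBp m (Axi : 'I_(m.*2.+1) -> int) (P0 : 'M['F_2]_(m.*2.+1)) (k : int)
    (a : 'rV['F_2]_(m.*2.+1)) : Prop :=
  [/\ (forall p, a 0 p != 0 -> Axi p = k),
      (forall p : 'I_(m.*2.+1), a 0 p != 0 -> ~~ odd p && (p != 0%N :> nat)) &
      (forall q : 'I_(m.*2.+1), (a *m P0) 0 q != 0 -> odd q)].

(* Main.v *)
Require Import Defs.
From HB Require Import structures.
From mathcomp Require Import all_boot all_order all_algebra zify.
Import Order.TTheory GRing.Theory Num.Theory.
Local Open Scope ring_scope.

Lemma evI_val m (i : nat) : (i <= m)%N -> nat_of_ord (evI m i) = i.*2.
Proof. move=> H; rewrite /evI inordK //; lia. Qed.
Lemma oddI_val m (j : nat) : (j < m)%N -> nat_of_ord (oddI m j) = j.*2.+1.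
Proof. move=> H; rewrite /oddI inordK //; lia. Qed.

Lemma ord_cases m (p : 'I_(m.*2.+1)) :
  (odd p /\ exists j : 'I_m, p = oddI m j) \/ (~~ odd p /\ exists i : 'I_m.+1, p = evI m i).
Proof.
have Hp := ltn_ord p; have E := odd_double_half p.
case Ho: (odd p); [left|right]; split => //.
  rewrite Ho /= in E.
  have Hj : (p./2 < m)%N by lia.
  exists (Ordinal Hj); apply: val_inj; rewrite /= oddI_val //; lia.
rewrite Ho /= in E.
have Hi : (p./2 < m.+1)%N by lia.
exists (Ordinal Hi); apply: val_inj; rewrite /= evI_val //=; lia.
Qed.

Section Arrows.
Variables (m : nat) (h l : 'I_m -> nat) (P0 Q0 : 'M['F_2]_(m.*2.+1)) (t : int) (lsp : bool).
Local Notation G := (Gen m h l t lsp).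
Definition mkX (p : 'I_(m.*2.+1)) : G := inl (inl (inl (inl p))).
Definition mkK (j : 'I_m) (i : 'I_(h j)) : G := inl (inl (inl (inr (existT _ j i)))).

Lemma DI_D1_K (v : {ffun G -> 'F_2}) j i :
  DI m h l P0 Q0 t lsp D1 v (mkK j i) = v (mkX (oddI m j)) * ((i : nat) == 0%N)%:R.
Proof.
rewrite ffunE (bigD1 (mkX (oddI m j))) //= big1 ?addr0.
  by rewrite oddI_val ?eqxx.
move=> x Hx.
case: x Hx => [[[[p|[j' i']]|[j' i']]|i']|i'] Hx //=; try by rewrite mulr0.
have -> : (nat_of_ord p == j.*2.+1) = false.
  apply/negbTE; apply: contra Hx => /eqP E; apply/eqP; congr mkX; apply: val_inj.
  by rewrite /= oddI_val.
by rewrite mulr0.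
Qed.

Lemma DI_D123_K (a : 'rV['F_2]_(m.*2.+1)) j i :
  DI m h l P0 Q0 t lsp D123 (inj0 m h l t lsp a) (mkK j i)
  = a 0 (evI m j.+1) * ((i : nat) == (h j).-1)%:R.
Proof.
rewrite ffunE (bigD1 (mkX (evI m j.+1))) //= big1 ?addr0.
  by rewrite ffunE /= evI_val ?eqxx.
move=> x Hx.
case: x Hx => [[[[p|[j' i']]|[j' i']]|i']|i'] Hx //=; rewrite ffunE /=; try by rewrite mul0r.
have -> : (nat_of_ord p == j.*2.+2) = false.
  apply/negbTE; apply: contra Hx => /eqP E; apply/eqP; congr mkX; apply: val_inj.
  by rewrite /= evI_val.
by rewrite mulr0.
Qed.

Lemma sum_pick (c : 'F_2) (r p : 'I_(m.*2.+1)) :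
  \sum_q (c * (q == r)%:R) * Q0 q p = c * Q0 r p.
Proof.
rewrite (bigD1 r) //= eqxx mulr1 big1 ?addr0 // => q /negbTE ->; by rewrite mulr0 mul0r.
Qed.

Definition E2 (y : G) (q : 'I_(m.*2.+1)) : 'F_2 :=
  match view m h l t lsp y with
  | GL j i => ((i == (l j).-1 : bool) : nat)%:R * (q == evI m j.+1)%:R
  | GN i => (([&& t == 0, ~~ lsp & i == 1%N] : bool) : nat)%:R * (q == evI m 0)%:R
  | GM i => (((t < 0) && (i == `|t|.-1) : bool) : nat)%:R * (q == evI m 0)%:R
  | _ => 0
  end.

Definition E12 (y : G) (q : 'I_(m.*2.+1)) : 'F_2 :=
  match view m h l t lsp y with
  | GX p => (([&& t == 0, lsp & p == 0%N :> nat] : bool) : nat)%:R * (q == evI m 0)%:R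
  | _ => 0
  end.

Definition xE (E : G -> 'I_(m.*2.+1) -> 'F_2) (b : {ffun G -> 'F_2}) : 'rV['F_2]_(m.*2.+1) :=
  \row_q \sum_y b y * E y q.

Lemma xE_mul E b p : (xE E b *m Q0) 0 p = \sum_y b y * \sum_q E y q * Q0 q p.
Proof.
rewrite mxE; under eq_bigr do rewrite mxE big_distrl /=.
rewrite exchange_big /=; apply: eq_bigr => y _; rewrite big_distrr /=.
by apply: eq_bigr => q _; rewrite mulrA.
Qed.

Lemma DI_D2_X b p : DI m h l P0 Q0 t lsp D2 b (mkX p) = (xE E2 b *m Q0) 0 p.
Proof.
rewrite xE_mul ffunE; apply: eq_bigr => y _; congr (_ * _).
case: y => [[[[p'|[j' i']]|[j' i']]|i']|i'] /=; rewrite /E2 /=;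
  try (by rewrite sum_pick); by rewrite big1 // => q _; rewrite mul0r.
Qed.

Lemma DI_D12_X b p : DI m h l P0 Q0 t lsp D12 b (mkX p) = (xE E12 b *m Q0) 0 p.
Proof.
rewrite xE_mul ffunE; apply: eq_bigr => y _; congr (_ * _).
case: y => [[[[p'|[j' i']]|[j' i']]|i']|i'] /=; rewrite /E12 /=;
  try (by rewrite sum_pick); by rewrite big1 // => q _; rewrite mul0r.
Qed.

Lemma xE2_even b q : xE E2 b 0 q != 0 -> ~~ odd q.
Proof.
rewrite mxE => /eqP H; apply/negP => Ho; apply: H; apply: big1 => y _.
case: y => [[[[p'|[j' i']]|[j' i']]|i']|i'] /=; rewrite /E2 /= ?mulr0 //;
  match goal with |- context [(q == ?r)] => have -> : (q == r) = false; [apply/negbTE; apply/eqP => Eq; move: Ho; rewrite Eq evI_val ?ltn_ord //= ?odd_double //|]; by rewrite !mulr0 end.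
Qed.

Lemma xE12_even b q : xE E12 b 0 q != 0 -> ~~ odd q.
Proof.
rewrite mxE => /eqP H; apply/negP => Ho; apply: H; apply: big1 => y _.
case: y => [[[[p'|[j' i']]|[j' i']]|i']|i'] /=; rewrite /E12 /= ?mulr0 //;
  match goal with |- context [(q == ?r)] => have -> : (q == r) = false; [apply/negbTE; apply/eqP => Eq; move: Ho; rewrite Eq evI_val ?ltn_ord //= ?odd_double //|]; by rewrite !mulr0 end.
Qed.
End Arrows.

Definition e0 {p q} (M : 'M[{poly 'F_2}]_(p,q)) : 'M['F_2]_(p,q) := map_mx (fun c => c.[0]) M.
Lemma e0M p q s (A : 'M[{poly 'F_2}]_(p,q)) (B : 'M_(q,s)) : e0 (A *m B) = e0 A *m e0 B.
Proof.
apply/matrixP => i j; rewrite !mxE horner_sum; apply: eq_bigr => k _; by rewrite !mxE hornerM.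
Qed.
Lemma e0C p q (x : 'M['F_2]_(p,q)) : e0 (map_mx polyC x) = x.
Proof. by apply/matrixP => i j; rewrite !mxE hornerC. Qed.

Lemma single_grad r (A : 'I_r -> int) (f : {poly 'F_2}) q k (F : int -> Prop) :
  (forall k', F k' <-> forall q' s, ((f *: delta_mx 0 q : 'rV_r) 0 q')`_s != 0 -> A q' - s%:Z <= k') ->
  f.[0] != 0 -> F k -> ~ F (k-1) -> A q = k.
Proof.
move=> HF Hn H1 H2.
have e : forall q' s, ((f *: delta_mx 0 q : 'rV_r) 0 q')`_s = if q' == q then f`_s else 0.
  by move=> q' s; rewrite !mxE eqxx /=; case: eqP => _; rewrite ?mulr1 ?mulr0 ?coef0.
have le1 : A q <= k.
  have := (proj1 (HF k) H1) q 0%N; rewrite e eqxx -horner_coef0 => /(_ Hn); by rewrite subr0.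
apply/eqP; rewrite eq_le le1 /= leNgt; apply/negP => Hlt; apply: H2; apply/HF => q' s.
rewrite !mxE eqxx /=; case: (eqVneq q' q) => [->|ne]; last by rewrite mulr0 coef0 eqxx.
move=> _; lia.
Qed.

Lemma Q0_grad r Axi Aeta P Q q p : compat r Axi Aeta P Q -> (Q q p).[0] != 0 -> Aeta q = Axi p.
Proof.
case=> _ _ HQ Hn; have Hq : Q q p != 0 by apply: contraNneq Hn => ->; rewrite horner0.
case: (HQ q p Hq) => H1 H2; symmetry.
by apply: (@single_grad _ _ _ _ _ (fun k => inF r Axi k (Q q p *: delta_mx 0 p)) _ Hn H1 H2).
Qed.

Lemma P0_grad r Axi Aeta P Q p q : filtered_basis r Axi Q Aeta -> compat r Axi Aeta P Q ->
  (P p q).[0] != 0 -> Axi p = Aeta q.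
Proof.
move=> [_ HB] [_ HP _] Hn; have Hq : P p q != 0 by apply: contraNneq Hn => ->; rewrite horner0.
case: (HP p q Hq) => H1 H2; symmetry.
apply: (@single_grad _ _ _ _ _ (fun k => inF r Axi k (P p q *: row q Q)) _ Hn H1 H2) => k'.
by rewrite rowE scalemxAl HB.
Qed.

Section Core.
Variables (m : nat) (Dm : 'M[{poly 'F_2}]_(m.*2.+1)) (Axi Aeta : 'I_(m.*2.+1) -> int)
  (P Q : 'M[{poly 'F_2}]_(m.*2.+1)) (h l : 'I_m -> nat).
Hypothesis HV : vert_simpl m Dm Axi h.
Hypothesis HH : horiz_simpl m Dm Axi Q Aeta l.
Hypothesis HC : compat (m.*2.+1) Axi Aeta P Q.
Hypothesis HDD : Dm *m Dm = 0.

Lemma D0E r p : (Dm r p).[0] = ((odd r) && (p == r.+1 :> nat))%:R.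
Proof.
rewrite horner_coef0; case: (@ord_cases _ r) => [[Ho [j Er]]|[Ho [i Er]]]; subst r.
  case: (HV.1 j) => _ _ H3; have := H3 p; rewrite -rowE !mxE coefB eqxx /= => /eqP; rewrite subr_eq0 => /eqP ->.
  rewrite oddI_val //= odd_double /=.
  have -> : (p == evI m j.+1) = (nat_of_ord p == j.*2.+2).
    by rewrite -(inj_eq val_inj) /= evI_val.
  by case: (_ == _); rewrite ?coef1 ?coef0.
have := HV.2 i p; rewrite -rowE mxE => ->.
rewrite evI_val ?odd_double //; by rewrite -ltnS.
Qed.


Let M := Q *m Dm *m P.
Lemma PQ1 : P *m Q = 1%:M. Proof. by case: HC. Qed.

Lemma bound_even (i : 'I_m.+1) q s : (M (evI m i) q)`_s != 0 -> Aeta q - s%:Z <= Aeta (evI m i) - 1.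
Proof.
case: HH => [[_ HB] _ He]; have := He i.
have -> : row (evI m i) Q *m Dm = row (evI m i) M *m Q by rewrite -!row_mul -!mulmxA PQ1 mulmx1.
by rewrite HB => /(_ q s); rewrite mxE.
Qed.

Lemma bound_odd (j : 'I_m) q s :
  (M (oddI m j) q - (q == evI m j.+1)%:R * 'X^(l j))`_s != 0 -> Aeta q - s%:Z <= Aeta (oddI m j) - 1.
Proof.
case: HH => [[_ HB] Ho _]; case: (Ho j) => _ _; set c := row (oddI m j) M - 'X^(l j) *: delta_mx 0 (evI m j.+1).
have -> : row (oddI m j) Q *m Dm - 'X^(l j) *: row (evI m j.+1) Q = c *m Q.
  by rewrite /c mulmxBl -scalemxAl -rowE -!row_mul -!mulmxA PQ1 mulmx1.
by rewrite HB => /(_ q s); rewrite /c !mxE eqxx /= mulrC.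
Qed.

Lemma bound_Y (k : int) (x' : 'rV['F_2]_(m.*2.+1)) :
  (forall q', x' 0 q' != 0 -> ~~ odd q' /\ Aeta q' = k + 1) ->
  forall q s, ((map_mx polyC x' *m M) 0 q)`_s != 0 -> Aeta q - s%:Z <= k.
Proof.
move=> Hx q s; rewrite mxE coef_sum => Hn.
case: (pickP (fun q' => (map_mx polyC x' 0 q' * M q' q)`_s != 0)) => [q' Hq'|H0]; last first.
  by move: Hn; rewrite big1 ?eqxx // => q' _; apply/eqP; rewrite -[_ == 0]negbK H0.
move: Hq'; rewrite mxE coefCM.
case: (eqVneq (x' 0 q') 0) => [->|Hx0]; first by rewrite mul0r eqxx.
case: (eqVneq (M q' q)`_s 0) => [->|HM]; first by rewrite mulr0 eqxx.
move=> _; case: (Hx q' Hx0) => Hev HA.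
case: (@ord_cases _ q') => [[Hod _]|[_ [i Ei]]]; first by rewrite Hod in Hev.
subst q'; have := @bound_even i q s HM; lia.
Qed.


Lemma e0_1 n : e0 (1%:M : 'M[{poly 'F_2}]_n) = 1%:M.
Proof. by apply/matrixP => i j; rewrite !mxE horner_coef0 coefMn coef1. Qed.

Lemma xQ (k : int) (x0 : 'rV['F_2]_(m.*2.+1)) r :
  ((\row_q (if Aeta q == k + 1 then x0 0 q else 0)) *m e0 Q) 0 r
  = if Axi r == k + 1 then (x0 *m e0 Q) 0 r else 0.
Proof.
rewrite !mxE.
transitivity (\sum_q (if Axi r == k + 1 then x0 0 q * e0 Q q r else 0)).
  apply: eq_bigr => q _; rewrite !mxE.
  case: (eqVneq (Q q r).[0] 0) => [->|Hn]; first by rewrite !mulr0; case: ifP.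
  by rewrite (@Q0_grad _ _ _ _ _ q r HC Hn); case: ifP; rewrite ?mul0r.
case: ifP => _; last by rewrite big1.
by [].
Qed.

Lemma core (k : int) (a x0 : 'rV['F_2]_(m.*2.+1)) :
  inBp m Axi (e0 P) k a -> a != 0 ->
  (forall q, x0 0 q != 0 -> ~~ odd q) ->
  (forall (j : 'I_m) (i : nat), (i < h j)%N ->
     (x0 *m e0 Q) 0 (oddI m j) * (i == 0%N)%:R = a 0 (evI m j.+1) * (i == (h j).-1)%:R) ->
  False.
Proof.
move=> [Ha1 Ha2 Ha3] Ha0 hx hc.
have P0Q0 : e0 P *m e0 Q = 1%:M by rewrite -e0M PQ1 e0_1.
have Q0P0 := mulmx1C P0Q0.
set x' := \row_q (if Aeta q == k + 1 then x0 0 q else 0).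
have Hx' : forall q', x' 0 q' != 0 -> ~~ odd q' /\ Aeta q' = k + 1.
  move=> q'; rewrite /x' mxE; case: (eqVneq (Aeta q') (k + 1)) => [HA|HA] Hn; last by rewrite eqxx in Hn.
  split => //; exact: hx.
set YP := map_mx polyC x' *m M.
have Key1 : e0 (map_mx polyC x' *m Q *m Dm) = a.
  apply/rowP => p; rewrite !e0M e0C mxE.
  under eq_bigr do rewrite /x' xQ [e0 Dm _ _]mxE D0E.
  case: (@ord_cases _ p) => [[Hop _]|[Hep [i Ei]]].
    rewrite big1; last first.
      move=> r _; have -> : (odd r && (nat_of_ord p == r.+1)) = false.
        by apply/negbTE/negP => /andP [Hr /eqP Epr]; move: Hop; rewrite Epr /= Hr.
      by rewrite mulr0.
    symmetry; apply/eqP; apply: contraT => Hn; have := Ha2 p Hn; by rewrite Hop.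
  subst p; have Hi := ltn_ord i; have Him : (i <= m)%N by lia.
  case: (posnP i) => [i0|ipos].
    rewrite big1; last first.
      move=> r _; have -> : (odd r && (nat_of_ord (evI m i) == r.+1)) = false.
        by rewrite evI_val // i0 /= andbF.
      by rewrite mulr0.
    symmetry; apply/eqP; apply: contraT => Hn; have := Ha2 _ Hn; by rewrite evI_val // i0.
  have Hj : (i.-1 < m)%N by lia.
  set j := Ordinal Hj.
  have Eij : evI m i = evI m j.+1 by rewrite /= prednK.
  have vj : nat_of_ord (evI m i) = j.*2.+2 by rewrite evI_val //= ; lia.
  rewrite (bigD1 (oddI m j)) //= big1; last first.
    move=> r Hr; have -> : (odd r && (nat_of_ord (evI m i) == r.+1)) = false; last by rewrite mulr0.
    apply/negbTE/negP => /andP [_ /eqP Er]; move: Hr; rewrite -(inj_eq val_inj) /= oddI_val //.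
    by rewrite vj in Er; case: Er => ->; rewrite eqxx.
  rewrite oddI_val // vj /= odd_double /= eqxx mulr1 addr0 Eij.
  case: (HV.1 j) => hpos hdiff _.
  have H0 := hc j 0%N hpos.
  have hlt : ((h j).-1 < h j)%N by rewrite prednK.
  have H1 := hc j _ hlt.
  case: (eqVneq (h j) 1%N) => Eh.
    rewrite Eh /= !mulr1 in H0; rewrite H0; case: eqP => // HA.
    symmetry; apply/eqP; apply: contraT => Hn; case: HA; have := Ha1 _ Hn; rewrite Eh in hdiff; change (oddI m i.-1) with (oddI m j); lia.
  have Hh : (h j).-1 != 0%N by apply/eqP; lia.
  rewrite eq_sym (negbTE Hh) /= mulr1 mulr0 in H0.
  rewrite eqxx (negbTE Hh) /= mulr1 mulr0 in H1.
  by rewrite -H1 H0; case: ifP.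
have Key2 : e0 YP = a *m e0 P by rewrite /YP /M !mulmxA e0M Key1.
have [q0 Hq0] : exists q0, (a *m e0 P) 0 q0 != 0.
  case: (pickP (fun q => (a *m e0 P) 0 q != 0)) => [q Hq|H0]; first by exists q.
  case/eqP: Ha0; have -> : a = a *m e0 P *m e0 Q by rewrite -mulmxA P0Q0 mulmx1.
  have -> : a *m e0 P = 0 by apply/rowP => q; rewrite [RHS]mxE; apply/eqP; rewrite -[_ == 0]negbK H0.
  by rewrite mul0mx.
case: (@ord_cases _ q0) => [[Hoq [j Eq]]|[Heq _]]; last by rewrite (Ha3 _ Hq0) in Heq.
have HB : filtered_basis _ Axi Q Aeta by case: HH.
have Aq0 : Aeta q0 = k.
  move: Hq0; rewrite mxE => Hs.
  case: (pickP (fun p => a 0 p * e0 P p q0 != 0)) => [p Hp|H0]; last first.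
    by move: Hs; rewrite big1 ?eqxx // => p _; apply/eqP; rewrite -[_ == 0]negbK H0.
  case: (eqVneq (a 0 p) 0) => [Ez|Hap]; first by rewrite Ez mul0r eqxx in Hp.
  case: (eqVneq (e0 P p q0) 0) => [Ez|HPp]; first by rewrite Ez mulr0 eqxx in Hp.
  rewrite mxE in HPp.
  by rewrite -(Ha1 _ Hap) (@P0_grad _ _ _ _ _ p q0 HB HC HPp).
subst q0.
set q1 := evI m j.+1.
have Aq1 : Aeta q1 = k + (l j)%:Z.
  case: HH => _ Ho _; case: (Ho j) => _ Hl _; rewrite /q1; lia.
have HZ : YP *m M = 0.
  have -> : YP *m M = (map_mx polyC x' *m Q) *m (Dm *m (P *m Q) *m Dm) *m P by rewrite /YP /M !mulmxA.
  by rewrite PQ1 mulmx1 HDD mulmx0 mul0mx.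
have bY := @bound_Y k x' Hx'.
have term : forall q (s : nat), (s <= l j)%N ->
    (YP 0 q)`_s * (M q q1)`_(l j - s)
    = if (q == oddI m j) && (s == 0%N) then (YP 0 (oddI m j))`_0 else 0.
  move=> q s Hs.
  case: (eqVneq (YP 0 q)`_s 0) => [Ez|Hy].
    rewrite Ez mul0r; case: andP => // [[/eqP Eq /eqP Es]]; subst q s; by rewrite Ez.
  have bq := bY q s Hy.
  case: (@ord_cases _ q) => [[Hoq' [j' Eq']]|[Heq' [i Ei]]].
    subst q; have hb := @bound_odd j' q1 (l j - s).
    have Hz : (M (oddI m j') q1 - (q1 == evI m j'.+1)%:R * 'X^(l j'))`_(l j - s) = 0.
      apply/eqP; apply: contraT => Hn; have := hb Hn.
      move=> H; have : False by lia. done.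
    move: Hz; rewrite coefB => /eqP; rewrite subr_eq0 => /eqP ->.
    case: (eqVneq j' j) => [Ej|Nj].
      subst j'; rewrite /q1 eqxx /= mulr1n mul1r coefXn /=.
      case: (eqVneq s 0%N) => [Es|Ns].
        by subst s; rewrite subn0 !eqxx /= mulr1n mulr1.
      have -> : (l j - s == l j)%N = false by apply/negbTE; apply/eqP; lia.
      by rewrite andbF /= mulr0n mulr0.
    have Nj' : nat_of_ord j' != nat_of_ord j by [].
    have -> : (q1 == evI m j'.+1) = false.
      by apply/negbTE; rewrite -(inj_eq val_inj) /= !evI_val //; apply/eqP; move/eqP: Nj'; lia.
    have -> : (oddI m j' == oddI m j) = false.
      by apply/negbTE; rewrite -(inj_eq val_inj) /= !oddI_val //; apply/eqP; move/eqP: Nj'; lia.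
    by rewrite /= mulr0n mul0r coef0 mulr0.
  subst q.
  have -> : (evI m i == oddI m j) = false.
    apply/negbTE; apply/negP => /eqP E; move: Heq'; by rewrite E Hoq.
  have Hz : (M (evI m i) q1)`_(l j - s) = 0.
    apply/eqP; apply: contraT => Hn; have := @bound_even i q1 (l j - s) Hn.
    move=> H; have : False by lia. done.
  by rewrite Hz mulr0.
have Hsum : ((YP *m M) 0 q1)`_(l j) = (YP 0 (oddI m j))`_0.
  rewrite mxE coef_sum.
  transitivity (\sum_q \sum_(s < (l j).+1)
     (if (q == oddI m j) && (nat_of_ord s == 0%N) then (YP 0 (oddI m j))`_0 else 0)).
    apply: eq_bigr => q _; rewrite coefM; apply: eq_bigr => s _; apply: term; by rewrite -ltnS.
  rewrite (bigD1 (oddI m j)) //= big_ord_recl /= eqxx /= big1 ?addr0; last first.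
    by move=> s _.
  by rewrite big1 ?addr0 // => q /negbTE ->; rewrite big1.
move: Hq0; rewrite -Key2 mxE horner_coef0 -Hsum HZ mxE coef0 eqxx.
by [].
Qed.

End Core.

Theorem lemma3p5 (m : nat) (Dm : 'M[{poly 'F_2}]_(m.*2.+1))
    (Axi Aeta : 'I_(m.*2.+1) -> int) (P Q : 'M[{poly 'F_2}]_(m.*2.+1))
    (h l : 'I_m -> nat) (g : nat) (n : int) (lsp : bool) :
  knot_complex (m.*2.+1) Axi Dm ->
  genus_of (m.*2.+1) Axi g -> (0 < g)%N ->
  vert_simpl m Dm Axi h ->
  horiz_simpl m Dm Axi Q Aeta l ->
  compat (m.*2.+1) Axi Aeta P Q ->
  let t := n - Axi (evI m 0) *+ 2 in
  let P0 := eval0 (m.*2.+1) P in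
  let Q0 := eval0 (m.*2.+1) Q in
  forall (k : int), - (g%:Z) <= k <= g%:Z ->
  forall a : 'rV['F_2]_(m.*2.+1), inBp m Axi P0 k a -> a != 0 ->
  ~ (exists b : {ffun Gen m h l t lsp -> 'F_2},
        DI m h l P0 Q0 t lsp D1 (DI m h l P0 Q0 t lsp D2 b)
        = DI m h l P0 Q0 t lsp D123 (inj0 m h l t lsp a)) /\
  ~ (exists b : {ffun Gen m h l t lsp -> 'F_2},
        DI m h l P0 Q0 t lsp D1 (DI m h l P0 Q0 t lsp D12 b)
        = DI m h l P0 Q0 t lsp D123 (inj0 m h l t lsp a)).
Proof.
move=> [HDD _ _ _] _ _ HV HH HC t P0 Q0 k _ a Ha Ha0; split.
  case=> b Heq.
  apply: (@core m Dm Axi Aeta P Q h l HV HH HC HDD k a _ Ha Ha0 (@xE2_even m h l t lsp b)) => j i Hi.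
  have := congr1 (fun f : {ffun Gen m h l t lsp -> 'F_2} => f (mkK m h l t lsp j (Ordinal Hi))) Heq.
  by rewrite /= DI_D1_K DI_D123_K DI_D2_X.
case=> b Heq.
apply: (@core m Dm Axi Aeta P Q h l HV HH HC HDD k a _ Ha Ha0 (@xE12_even m h l t lsp b)) => j i Hi.
have := congr1 (fun f : {ffun Gen m h l t lsp -> 'F_2} => f (mkK m h l t lsp j (Ordinal Hi))) Heq.
by rewrite /= DI_D1_K DI_D123_K DI_D12_X.
Qed.
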